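(* Let $j\ge1$ and $s\ge j$ be integers, write $s=qj+r$ with integers $q\ge1$ and $0\le r<j$, and let $\alpha=\sum_{i=0}^{q-1}(r+ij+1)$. Then for every positive integer $n$, \[ g_{j,s,1}(n)=g_{j,r,1}(n+\alpha)-qj, \] where $g_{j,s,1}$ and $g_{j,r,1}$ are the sequences defined in the context.
   Context: Fix integers $j\ge1$, $\lambda\ge1$, $s\ge0$. Define a labeled infinite rooted tree $\mathcal K$ as follows. It has ''supernodes'' $S_0,S_1,S_2,\dots$ with an edge between $S_i$ and $S_{i+1}$ for every $i\ge0$ ($S_0$ is the root). $S_0$ has two further children: the ''initial leaf'' and a node $N_0$, which is a leaf. For each $i\ge1$, $S_i$ has a child $N_i$ (the ''knot node''), and attached to $N_i$ are $\lambda$ chains, each a path of $i\cdot j$ nodes hanging from $N_i$; the last (bottom) node of each chain is a leaf. Each supernode carries $s$ labels and every other node carries exactly one label. The labels are the consecutive positive integers $1,2,3,\dots$, assigned in the following order: initial leaf, $S_0$, $N_0$; then for $i=1,2,3,\dots$: $S_i$ (its $s$ labels), $N_i$, then the nodes of the first chain of $N_i$ from top to bottom, then the second chain, ..., then the $\lambda$-th chain. The initial leaf has weight $1$; every other leaf of $\mathcal K$ (namely $N_0$ and the bottom node of each chain) has weight $j$. The leaf weight sequence $w(n)=w_{j,s,\lambda}(n)$ ($n\ge1$) is the total weight of the leaves of $\mathcal K$ whose label is $\le n$. Explicitly, $w(n)=1+j\cdot\#\{\ell\in L:\ell\le n\}$, where $L$ consists of the number $s+2$ together with the numbers $L_{i,c}=s+2+\sum_{l=1}^{i-1}(s+1+\lambda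 l j)+s+1+c\,i\,j$ for $i\ge1$, $1\le c\le\lambda$. The sequence $g_{j,s,\lambda}$ is defined by $g_{j,s,\lambda}(n)=w_{j,s,\lambda}(n)$ for $1\le n\le 3+2s+\lambda j$ and $g_{j,s,\lambda}(n)=g_{j,s,\lambda}(n-s-g_{j,s,\lambda}(n-j))+\lambda j$ for $n>3+2s+\lambda j$ (this is well defined). The same definitions are applied with $s$ replaced by $r$ to obtain $g_{j,r,1}$. *)

(* Defs.v *)
From mathcomp Require Import all_boot.
Set Implicit Arguments. Unset Strict Implicit. Unset Printing Implicit Defensive.

Definition Lic (j s lam i c : nat) : nat :=
  s + 2 + \sum_(1 <= l < i) (s + 1 + lam * l * j) + (s + 1) + c * i * j.

(* The elements of L are pairwise
   distinct (s+2 < L_{1,1} and L_{i,c} strictly increases in (i,c)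
   lexicographically), and L_{i,c} >= i, so only i <= n matter. *)
Definition countL (j s lam n : nat) : nat :=
  (s + 2 <= n) + \sum_(1 <= i < n.+1) \sum_(1 <= c < lam.+1) (Lic j s lam i c <= n).

Definition w (j s lam n : nat) : nat := 1 + j * countL j s lam n.

(* one step of the recursion: given l = [g(1); ...; g(m)], compute g(m+1).
   (0 :: l) is indexed so that nth 0 (0 :: l) k = g(k) for 1 <= k <= m. *)
Definition gnext (j s lam : nat) (l : seq nat) : nat :=
  let n := (size l).+1 in
  let G k := nth 0 (0 :: l) k in
  if n <= 3 + 2 * s + lam * j then w j s lam n
  else G (n - s - G (n - j)) + lam * j.

Fixpoint gseq (j s lam N : nat) : seq nat :=
  match N with
  | 0 => [::]
  | N'.+1 => let l := gseq j s lam N' in rcons l (gnext j s lam l)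
  end.

Definition g (j s lam n : nat) : nat := nth 0 (0 :: gseq j s lam n) n.

(* Main.v *)
Require Import Defs.
From mathcomp Require Import all_boot zify.

Fixpoint P (j s i : nat) : nat :=
  match i with 0 => s + 2 | i'.+1 => P j s i' + (s + 1 + i'.+1 * j) end.

Lemma P_S j s i : P j s i.+1 = P j s i + (s + 1 + i.+1 * j).
Proof. by []. Qed.

Lemma P_lt j s a b : P j s a < P j s (a + b).+1.
Proof. elim: b => [|b IH]; rewrite ?addn0 ?addnS P_S; lia. Qed.

Lemma P_ltE j s a b : (P j s a < P j s b) = (a < b).
Proof.
case: (ltnP a b) => h.
- by rewrite -(subnKC h) addSn P_lt.
- apply/negbTE; rewrite -leqNgt.
  case: (ltngtP b a) => h2; last by subst.
  + by apply: ltnW; rewrite -(subnKC h2) addSn P_lt.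
  + by rewrite ltnNge h in h2.
Qed.

Lemma P_leE j s a b : (P j s a <= P j s b) = (a <= b).
Proof. by rewrite leqNgt P_ltE -leqNgt. Qed.

Lemma P_ge j s i : i < P j s i.
Proof. elim: i => [|i IH]; first by rewrite /= addn2. rewrite P_S -addn1; apply: leq_add IH _; by rewrite addnAC addn1. Qed.

Lemma P_sum j s i : P j s i = s + 2 + \sum_(1 <= l < i.+1) (s + 1 + l * j).
Proof.
elim: i => [|i IH]; first by rewrite big_geq // addn0.
rewrite P_S IH (big_nat_recr i.+1) //=. lia.
Qed.

Lemma Lic_P j s i : 1 <= i -> Lic j s 1 i 1 = P j s i.
Proof.
case: i => // i _; rewrite /Lic P_sum (big_nat_recr i.+1) //= mul1n. under eq_bigr => l _ do rewrite mul1n. lia.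
Qed.

Lemma sum_le n k : \sum_(1 <= i < n.+1) (i <= k) = minn n k.
Proof.
elim: n => [|n IH]; first by rewrite big_geq // min0n.
rewrite big_nat_recr //= IH. case: (leqP n.+1 k) => h /=; lia.
Qed.

Lemma countL_P j s n : countL j s 1 n = \sum_(1 <= i < n.+1) (P j s i <= n) + (P j s 0 <= n).
Proof.
rewrite /countL addnC; congr (_ + _).
apply: eq_big_nat => i /andP [h1 _]. by rewrite big_nat1 Lic_P.
Qed.

Lemma w_lo j s n : n < P j s 0 -> w j s 1 n = 1.
Proof.
move=> h; rewrite /w countL_P big1_seq ?muln0 ?addn0.
  by rewrite leqNgt h muln0.
move=> i /andP [_]; rewrite mem_index_iota => /andP [h1 _].
apply/eqP; rewrite eqb0 -ltnNge. apply: (leq_trans h). apply: ltnW. by rewrite P_ltE.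
Qed.

Lemma w_mid j s n k : P j s k <= n < P j s k.+1 -> w j s 1 n = 1 + j * k.+1.
Proof.
move=> /andP [h1 h2]; rewrite /w countL_P.
have -> : P j s 0 <= n by apply: leq_trans h1; rewrite P_leE.
have -> : \sum_(1 <= i < n.+1) (P j s i <= n) = \sum_(1 <= i < n.+1) (i <= k).
  apply: eq_big_nat => i _; congr nat_of_bool; case: (leqP i k) => hi.
  - by apply: leq_trans h1; rewrite P_leE.
  - by apply/negbTE; rewrite -ltnNge; apply: leq_trans h2 _; rewrite P_leE.
rewrite sum_le. have := P_ge j s k. lia.
Qed.

Lemma P_cases j s n : n < P j s 0 \/ exists k, P j s k <= n < P j s k.+1.
Proof.
elim: n => [|n [h|[k /andP [h1 h2]]]]; first by left; rewrite /P addn2.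
- case: (ltnP n.+1 (P j s 0)) => h'; first by left.
  right; exists 0; rewrite h' P_S; lia.
- right. case: (ltnP n.+1 (P j s k.+1)) => h'.
  + exists k; rewrite h'; lia.
  + exists k.+1; rewrite h' (P_S j s k.+1). lia.
Qed.

Lemma w_rec j s n : 1 <= j -> 3 + 2 * s + j < n ->
  w j s 1 n = w j s 1 (n - s - w j s 1 (n - j)) + j.
Proof.
move=> hj hn.
case: (P_cases j s n) => [h|[k hk]]; first by move: h; rewrite /=; lia.
case: k hk => [|k] hk.
  move: hk; rewrite P_S /= mul1n; lia.
rewrite (@w_mid j s n k.+1 hk).
move: hk; rewrite !P_S => /andP [h1 h2].
set a := P j s k in h1 h2 *.
have E1 : k.+2 * j = k.+1 * j + j by rewrite mulSn addnC.
have E2 : j * k.+2 = j * k.+1 + j by rewrite mulnS addnC.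
have E3 : j * k.+1 = k.+1 * j by rewrite mulnC.
case: (leqP (a + (s + 1 + k.+1 * j)) (n - j)) => h3.
- rewrite (@w_mid j s (n - j) k.+1); last by rewrite !P_S -/a; apply/andP; split; lia.
  rewrite (@w_mid j s _ k); last by rewrite !P_S -/a; apply/andP; split; lia.
  lia.
- rewrite (@w_mid j s (n - j) k); last by rewrite !P_S -/a; apply/andP; split; lia.
  rewrite (@w_mid j s _ k); last by rewrite !P_S -/a; apply/andP; split; lia.
  lia.
Qed.

Lemma w_rec_pos j s n : 1 <= j -> 3 + 2 * s + j < n ->
  s + 2 <= n - s - w j s 1 (n - j).
Proof.
move=> hj hn.
case: (P_cases j s n) => [h|[k hk]]; first by move: h; rewrite /=; lia.
case: k hk => [|k] hk.
  move: hk; rewrite P_S /= mul1n; lia.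
have h0 : P j s 0 <= P j s k by rewrite P_leE.
move: hk h0; rewrite !P_S => /andP [h1 h2].
set a := P j s k in h1 h2 *.
have -> : P j s 0 = s + 2 by [].
move=> h0.
have E1 : k.+2 * j = k.+1 * j + j by rewrite mulSn addnC.
have E2 : j * k.+2 = j * k.+1 + j by rewrite mulnS addnC.
have E3 : j * k.+1 = k.+1 * j by rewrite mulnC.
case: (leqP (a + (s + 1 + k.+1 * j)) (n - j)) => h3.
- rewrite (@w_mid j s (n - j) k.+1); last by rewrite !P_S -/a; apply/andP; split; lia.
  lia.
- rewrite (@w_mid j s (n - j) k); last by rewrite !P_S -/a; apply/andP; split; lia.
  lia.
Qed.

Lemma size_gseq j s lam N : size (gseq j s lam N) = N.
Proof. by elim: N => //= N IH; rewrite size_rcons IH. Qed.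

Lemma nth_gseq j s lam N k : k <= N -> nth 0 (0 :: gseq j s lam N) k = g j s lam k.
Proof.
elim: N => [|N IH]; first by rewrite leqn0 => /eqP ->.
rewrite leq_eqVlt => /orP [/eqP -> //|hk].
rewrite /= -rcons_cons nth_rcons /= size_gseq hk.
exact: IH.
Qed.

Lemma g_S j s lam m : g j s lam m.+1 = gnext j s lam (gseq j s lam m).
Proof. by rewrite /g /= nth_rcons size_gseq ltnn eqxx. Qed.

Lemma w_ge1 j s n : 1 <= w j s 1 n.
Proof. by rewrite /w. Qed.

Lemma g_w j s n : 1 <= j -> 1 <= n -> g j s 1 n = w j s 1 n.
Proof.
move=> hj; elim/ltn_ind: n => n IH hn.
case: n IH hn => // m IH _.
rewrite g_S /gnext size_gseq.
case: ifP => // hc.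
have hc' : 3 + 2 * s + j < m.+1 by move: hc; rewrite mul1n; lia.
have hp := @w_rec_pos j s m.+1 hj hc'.
rewrite (@nth_gseq j s 1 m (m.+1 - j)); last by lia.
rewrite IH; [|lia|lia].
rewrite nth_gseq; last by have := w_ge1 j s (m.+1 - j); lia.
rewrite IH; [|have := w_ge1 j s (m.+1 - j); lia|lia].
by rewrite mul1n -w_rec.
Qed.

Lemma P_q j r q : P j r q = r + 2 + \sum_(0 <= i < q) (r + i * j + 1) + q * j.
Proof.
elim: q => [|q IH]; first by rewrite big_geq // addn0 mul0n addn0.
rewrite P_S IH (big_nat_recr q) //= mulSn. lia.
Qed.

Lemma P_shift j r q i :
  P j r (i + q) = P j (q * j + r) i + \sum_(0 <= l < q) (r + l * j + 1).
Proof.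
elim: i => [|i IH].
  by rewrite add0n P_q /=; lia.
rewrite addSn !P_S IH.
have -> : (i + q).+1 * j = q * j + i.+1 * j by rewrite -mulnDl; congr (_ * _); lia.
lia.
Qed.

Lemma w_shift j r q n : 1 <= q -> 1 <= n ->
  w j (q * j + r) 1 n + q * j = w j r 1 (n + \sum_(0 <= l < q) (r + l * j + 1)).
Proof.
case: q => // q _ hn.
have Hs := P_shift j r q.+1.
have H0 := Hs 0. rewrite add0n P_S in H0.
have E : P j (q.+1 * j + r) 0 = q.+1 * j + r + 2 by [].
case: (P_cases j (q.+1 * j + r) n) => [h|[k /andP [h1 h2]]].
- rewrite w_lo //.
  rewrite E in h H0.
  move: H0 h; set S := \sum_(0 <= l < q.+1) _; set X := q.+1 * j => H0 h.
  rewrite (@w_mid j r _ q); last first.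
    rewrite P_S -/X; apply/andP; split; lia.
  by rewrite mulnC.
- rewrite (@w_mid _ _ _ k); last by apply/andP.
  rewrite (@w_mid j r _ (k + q.+1)); last first.
    rewrite -(addSn k q.+1) !Hs. apply/andP; split; lia.
  rewrite -(addSn k q.+1) mulnDr (mulnC j q.+1); lia.
Qed.

Theorem theorem4p3 (j s q r : nat) :
  1 <= j -> j <= s -> 1 <= q -> r < j -> s = q * j + r ->
  forall n : nat, 1 <= n ->
    g j s 1 n + q * j = g j r 1 (n + \sum_(0 <= i < q) (r + i * j + 1)).
Proof.
move=> hj _ hq _ -> n hn.
rewrite !g_w //; last by lia.
exact: w_shift.
Qed.
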